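(* Let $q$ be a prime power and $m,n$ positive integers, and set $$\Upsilon(m,n;q)=\frac{\phi(q^{mn}-1)}{mn}\, q^{m(m-1)(n-1)}\prod_{i=1}^{m-1}(q^m-q^i),$$ where $\phi$ is Euler's totient function. Then the number of primitive $\sigma$-LFSRs of order $n$ over $\mathbb{F}_{q^m}$ equals $\Upsilon(m,n;q)$ if and only if $$\left|\left\{T\in \mathrm{BCM}(m,n;q)\cap \mathrm{GL}_{mn}(\mathbb{F}_q) : o(T)=q^{mn}-1\right\}\right| = \Upsilon(m,n;q),$$ where $o(T)$ denotes the order of $T$ in the group $\mathrm{GL}_{mn}(\mathbb{F}_q)$.
   Context: Fix an $\mathbb{F}_q$-basis $\{\alpha_0,\dots,\alpha_{m-1}\}$ of $\mathbb{F}_{q^m}$ and, for $s\in\mathbb{F}_{q^m}$, let $\mathbf{s}\in\mathbb{F}_q^m$ (a row vector) be its coordinate vector. A $\sigma$-LFSR of order $n$ over $\mathbb{F}_{q^m}$ is given by an $n$-tuple $(C_0,\dots,C_{n-1})$ of $m\times m$ matrices over $\mathbb{F}_q$; given an initial state $(s_0,\dots,s_{n-1})\in\mathbb{F}_{q^m}^n$ it generates the sequence $(s_0,s_1,\dots)$ in $\mathbb{F}_{q^m}$ defined by $\mathbf{s}_{i+n}=\mathbf{s}_iC_0+\mathbf{s}_{i+1}C_1+\cdots+\mathbf{s}_{i+n-1}C_{n-1}$ for $i\ge 0$. A sequence $(s_j)$ is periodic with period $r$ if $r$ is the least positive integer with $s_{j+r}=s_j$ for all $j\ge 0$. The $\sigma$-LFSR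 is primitive if for every nonzero initial state the generated sequence is periodic with period $q^{mn}-1$. Two $\sigma$-LFSRs are counted as distinct when their coefficient tuples $(C_0,\dots,C_{n-1})$ differ. An $(m,n)$-block companion matrix over $\mathbb{F}_q$ is an $mn\times mn$ matrix, written in $n\times n$ blocks of size $m\times m$, whose last block column is $(C_0,C_1,\dots,C_{n-1})^{T}$ for some $C_0,\dots,C_{n-1}\in M_m(\mathbb{F}_q)$, whose block in position $(i+1,i)$ is the identity $I_m$ for $i=1,\dots,n-1$, and all of whose other blocks are zero; $\mathrm{BCM}(m,n;q)$ denotes the set of all such matrices. *)

(* Defs.v *)
From HB Require Import structures.
From mathcomp Require Import all_boot all_order all_algebra all_field.
From mathcomp Require Import boolp.
Set Implicit Arguments. Unset Strict Implicit. Unset Printing Implicit Defensive.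
Import GRing.Theory.
Local Open Scope ring_scope.

Section Defs.
Variable F : finFieldType.

(* An element of F_{q^m} is represented by its coordinate row vector in
   'rV[F]_m w.r.t. the fixed basis; a sigma-LFSR of order n is a family
   C : 'I_n -> 'M[F]_m of m x m matrices. *)

Fixpoint lfsr_prefix (m n : nat) (C : 'I_n -> 'M[F]_m) (init : 'I_n -> 'rV[F]_m)
    (N : nat) : seq 'rV[F]_m :=
  match N with
  | 0 => [::]
  | N'.+1 =>
      let p := lfsr_prefix C init N' in
      rcons p (if (insub N' : option 'I_n) is Some i then init i
               else \sum_(k < n) nth 0 p (N' - n + k)%N *m C k)
  end.

Definition lfsr_seq (m n : nat) (C : 'I_n -> 'M[F]_m) (init : 'I_n -> 'rV[F]_m)
    (j : nat) : 'rV[F]_m :=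
  nth 0 (lfsr_prefix C init j.+1) j.

Definition seq_period (T : Type) (s : nat -> T) (r : nat) : Prop :=
  (0 < r)%N /\ (forall j, s (j + r)%N = s j) /\
  (forall r', (0 < r')%N -> (forall j, s (j + r')%N = s j) -> (r <= r')%N).

Definition primitive_lfsr (m n : nat) (C : 'I_n -> 'M[F]_m) : Prop :=
  forall init : 'I_n -> 'rV[F]_m, (exists i, init i != 0) ->
    seq_period (lfsr_seq C init) (#|F| ^ (m * n) - 1)%N.

Lemma blk_idx_proof (m n : nat) (bi : 'I_n) (oi : 'I_m) : (bi * m + oi < n * m)%N.
Proof.
have h1 := ltn_ord oi; have h2 := ltn_ord bi.
apply: (@leq_trans (bi * m + m)); first by rewrite ltn_add2l.
by rewrite -mulSnr leq_mul2r h2 orbT.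
Qed.

Definition blk_idx (m n : nat) (bi : 'I_n) (oi : 'I_m) : 'I_(n * m) :=
  Ordinal (blk_idx_proof bi oi).

Definition bcm_entry (m n : nat) (C : 'I_n -> 'M[F]_m)
    (bi : 'I_n) (oi : 'I_m) (bj : 'I_n) (oj : 'I_m) : F :=
  if val bj == n.-1 then C bi oi oj
  else if val bi == (val bj).+1 then (oi == oj)%:R else 0.

Definition is_bcm (m n : nat) (T : 'M[F]_(n * m)) : bool :=
  [exists C : {ffun 'I_n -> 'M[F]_m},
    [forall bi, forall oi, forall bj, forall oj,
      T (blk_idx bi oi) (blk_idx bj oj) == bcm_entry C bi oi bj oj]].

Definition mx_order_is (N : nat) (T : 'M[F]_N) (k : nat) : bool :=
  [&& (0 < k)%N, T ^+ k == 1%:M & [forall j : 'I_k, (0 < j)%N ==> (T ^+ j != 1%:M)]].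

End Defs.

Definition Upsilon (m n q : nat) : rat :=
  (totient (q ^ (m * n) - 1))%:R / (m * n)%:R
  * (q ^ (m * (m - 1) * (n - 1)))%:R
  * \prod_(1 <= i < m) ((q ^ m)%:R - (q ^ i)%:R).

(* Main.v *)
Require Import Defs.
From HB Require Import structures.
From mathcomp Require Import all_boot all_order all_algebra all_field.
From mathcomp Require Import boolp.
Set Implicit Arguments. Unset Strict Implicit. Unset Printing Implicit Defensive.
Import GRing.Theory.
Local Open Scope ring_scope.

Lemma key_lemma (F : finFieldType) d (T : 'M[F]_d) N :
  N = (expn #|F| d - 1)%N -> (0 < d)%N -> T ^+ N = 1%:M ->
  (forall j : 'I_N, (0 < j)%N -> T ^+ j != 1%:M) ->
  forall r, (0 < r < N)%N -> exists e, T ^+ r - 1%:M = T ^+ e.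
Proof.
case: d T => [//|d'] T eN _ TN Tj r /andP[r0 rN].
have N0 : (0 < N)%N by apply: leq_ltn_trans rN.
set k := degree_mxminpoly T.
pose S := [set horner_mx T (rVpoly u) | u : 'rV[F]_k].
have memS p : horner_mx T p \in S.
  apply/imsetP; exists (poly_rV (p %% mxminpoly T)) => //.
  rewrite poly_rV_K ?size_mod_mxminpoly // -horner_mxK.
  by rewrite mx_inv_hornerK // horner_mx_mem.
have kd : (k <= d'.+1)%N.
  have := dvdp_leq (monic_neq0 (char_poly_monic T)) (mxminpoly_dvd_char T).
  by rewrite size_mxminpoly size_char_poly.
have cardS : (#|S| <= #|F| ^ d'.+1)%N.
  apply: leq_trans (leq_imset_card _ _) _.
  rewrite card_mx mul1n; apply: leq_pexp2l kd; apply/card_gt0P; by exists 0.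
have S0 : 0 \in S by rewrite -(rmorph0 (horner_mx T)) memS.
have powS i : T ^+ i = horner_mx T ('X^i).
  by rewrite rmorphXn /= horner_mx_X.
have Tu : T \in unitmx.
  apply: (proj1 (@mulmx1_unit _ _ T (T ^+ N.-1) _)).
  by rewrite -[T *m _]/(T * T ^+ N.-1) -exprS prednK.
have Tinj : {in [pred i : nat | (i < N)%N] &, injective (fun i => T ^+ i)}.
  move=> i j; rewrite !inE => iN jN eij.
  wlog lij : i j iN jN eij / (i <= j)%N.
    by move=> W; case/orP: (leq_total i j) => h; [|symmetry]; apply: W.
  apply/eqP; rewrite eqn_leq lij /=; rewrite leqNgt; apply/negP => lt.
  have jiN : (j - i < N)%N by apply: leq_ltn_trans (leq_subr _ _) jN.
  have := Tj (Ordinal jiN); rewrite /= subn_gt0 lt => /(_ isT) /negP; apply.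
  have Tu' : T \is a GRing.unit := Tu.
  have e2 : T ^+ i * T ^+ (j - i) = T ^+ i * 1 by rewrite -exprD subnKC // -eij mulr1.
  by apply/eqP; exact: (mulrI (unitrX i Tu') e2).
have Tu' : T \is a GRing.unit := Tu.
pose P := [set T ^+ (val i) | i : 'I_N].
have cardP : #|P| = N.
  rewrite card_imset ?card_ord // => i j /= eij; apply: val_inj.
  by apply: Tinj; rewrite ?inE ?ltn_ord.
have PS : P \subset S :\ 0.
  apply/subsetP => X /imsetP [i _ ->]; rewrite !inE; apply/andP; split; last by rewrite powS memS.
  apply/eqP=> h; move: (unitrX i Tu'); by rewrite h unitr0.
have cardS0 : leq #|S :\ 0| #|P|.
  rewrite cardP eN; move: cardS; rewrite (cardsD1 0 S) S0 add1n.
  by move=> h; rewrite leq_subRL // ?add1n //; apply: leq_trans h; rewrite ltnS.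
have /eqP PE : P == S :\ 0 by rewrite eqEcard PS cardS0.
have : T ^+ r - 1%:M \in S :\ 0.
  rewrite !inE subr_eq0 (Tj (Ordinal rN)) //=.
  have -> : T ^+ r - 1%:M = horner_mx T ('X^r - 1).
    by rewrite rmorphB /= -powS (rmorph1 (horner_mx T)).
  exact: memS.
by rewrite -PE => /imsetP [e _ ->]; exists e.
Qed.

Section Blk.
Variables (F : finFieldType) (m n : nat).
Hypotheses (hm : (0 < m)%N) (hn : (0 < n)%N).

Lemma bdx_proof (k : 'I_(n * m)) : (k %/ m < n)%N.
Proof. by rewrite ltn_divLR. Qed.
Definition bdx (k : 'I_(n * m)) : 'I_n := Ordinal (bdx_proof k).
Definition odx (k : 'I_(n * m)) : 'I_m := Ordinal (ltn_pmod k hm).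

Lemma blk_split k : blk_idx (bdx k) (odx k) = k.
Proof. by apply: val_inj; rewrite /= -divn_eq. Qed.
Lemma bdx_blk b o : bdx (blk_idx b o) = b.
Proof. by apply: val_inj; rewrite /= divnMDl // divn_small ?addn0. Qed.
Lemma odx_blk b o : odx (blk_idx b o) = o.
Proof. by apply: val_inj; rewrite /= modnMDl modn_small. Qed.

Lemma sum_blk (f : 'I_(n * m) -> F) :
  \sum_l f l = \sum_b \sum_o f (blk_idx b o).
Proof.
rewrite pair_big /= (reindex (fun p : 'I_n * 'I_m => blk_idx p.1 p.2)) //=.
apply: onW_bij; exists (fun k => (bdx k, odx k)) => [[b o]|k] /=.
  by rewrite bdx_blk odx_blk.
by rewrite blk_split.
Qed.

Definition bcmx (C : 'I_n -> 'M[F]_m) : 'M[F]_(n * m) :=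
  \matrix_(i, l) bcm_entry C (bdx i) (odx i) (bdx l) (odx l).

Lemma bcmxE C b o b' o' :
  bcmx C (blk_idx b o) (blk_idx b' o') = bcm_entry C b o b' o'.
Proof. by rewrite mxE !bdx_blk !odx_blk. Qed.

Variable C : 'I_n -> 'M[F]_m.
Variable init : 'I_n -> 'rV[F]_m.
Local Notation s := (lfsr_seq C init).

Lemma size_prefix M : size (lfsr_prefix C init M) = M.
Proof. by elim: M => //= M IH; rewrite size_rcons IH. Qed.

Lemma nth_prefix M i : (i < M)%N -> nth 0 (lfsr_prefix C init M) i = s i.
Proof.
elim: M => // M IH; rewrite ltnS leq_eqVlt => /orP [/eqP ->|lt] //.
by rewrite /= nth_rcons size_prefix lt IH.
Qed.

Lemma seq_init j (hj : (j < n)%N) : s j = init (Ordinal hj).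
Proof.
rewrite /lfsr_seq /= nth_rcons size_prefix ltnn eqxx.
by rewrite insubT.
Qed.

Lemma seq_rec j : s (j + n)%N = \sum_(k < n) s (j + k)%N *m C k.
Proof.
rewrite /lfsr_seq /= nth_rcons size_prefix ltnn eqxx insubF; last first.
  by apply/negbTE; rewrite -leqNgt leq_addl.
apply: eq_bigr => k _; rewrite addnK nth_prefix //.
by rewrite ltn_add2l.
Qed.

Definition st j : 'rV[F]_(n * m) := \row_l s (j + bdx l)%N 0 (odx l).

Lemma stE j b o : st j 0 (blk_idx b o) = s (j + b)%N 0 o.
Proof. by rewrite mxE bdx_blk odx_blk. Qed.

Lemma st_step j : st j.+1 = st j *m bcmx C.
Proof.
apply/rowP => k; rewrite -(blk_split k); move: (bdx k) (odx k) => b o {k}.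
rewrite stE mxE sum_blk.
under eq_bigr => b' _ do under eq_bigr => o' _ do rewrite stE bcmxE /bcm_entry.
case: eqP => [bn|bn].
  have -> : (j.+1 + b = j + n)%N by have e := prednK hn; rewrite bn addSnnS e.
  rewrite seq_rec summxE; apply: eq_bigr => b' _; rewrite mxE.
  by apply: eq_bigr.
have b1n : (b.+1 < n)%N.
  by rewrite ltn_neqAle ltn_ord andbT; apply/eqP => h; exact: bn (congr1 predn h).
rewrite (bigD1 (Ordinal b1n)) //= [X in _ + X]big1 ?addr0; last first.
  move=> b' hb'; apply: big1 => o' _.
  have -> : (val b' == b.+1) = false.
    by apply/negbTE; apply: contra hb' => /eqP h; apply/eqP/val_inj.
  by rewrite mulr0.
rewrite eqxx (bigD1 o) //= eqxx mulr1 [X in _ + X]big1 ?addr0.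
  by rewrite addnS addSn.
by move=> o' /negbTE ->; rewrite mulr0.
Qed.

Lemma st_pow j : st j = st 0 *m bcmx C ^+ j.
Proof.
elim: j => [|j IH]; first by rewrite expr0 mulmx1.
by rewrite st_step IH exprSr -mulmxA.
Qed.

Lemma perP r : (forall j, s (j + r)%N = s j) <-> st 0 *m bcmx C ^+ r = st 0.
Proof.
split=> [P|P j].
  rewrite -st_pow; apply/rowP => k; rewrite -(blk_split k).
  by rewrite !stE addnC P.
have eS i : s i = \row_o st i 0 (blk_idx (Ordinal hn) o).
  by apply/rowP => o; rewrite mxE stE addn0.
by rewrite (eS (j + r)%N) (eS j) (st_pow (j + r)%N) (st_pow j) addnC exprD mulmxA P.
Qed.

End Blk.

Section M3.
Variables (F : finFieldType) (m n : nat).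
Hypotheses (hm : (0 < m)%N) (hn : (0 < n)%N).
Local Notation Nq := (expn #|F| (m * n) - 1)%N.

Lemma Nq_gt0 : (0 < Nq)%N.
Proof.
have q1 : (1 < #|F|)%N.
  by apply/card_gt1P; exists 0, 1; rewrite !inE eq_sym oner_neq0.
have q0 := ltnW q1; rewrite subn_gt0; apply: leq_trans q1 _.
by rewrite -{1}(expn1 #|F|) leq_pexp2l // muln_gt0 hm hn.
Qed.

Definition init_of (v : 'rV[F]_(n * m)) (b : 'I_n) : 'rV[F]_m :=
  \row_o v 0 (blk_idx b o).

Lemma st_init_of (C : 'I_n -> 'M[F]_m) v : st hm C (init_of v) 0 = v.
Proof.
apply/rowP => k; rewrite -(blk_split hm k); move: (bdx hm k) (odx hm k) => b o.
by rewrite stE add0n (seq_init _ _ (ltn_ord b)) mxE; congr (v 0 (blk_idx _ o)); apply: val_inj.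
Qed.

Lemma init_of_nz (v : 'rV[F]_(n * m)) : v != 0 -> exists i, init_of v i != 0.
Proof.
move=> vn; apply/existsP; apply: contraT; rewrite negb_exists => /forallP h.
suff : v = 0 by move=> /eqP; rewrite (negbTE vn).
apply/rowP => k; rewrite -(blk_split hm k) mxE.
have /eqP := negbNE (h (bdx hm k)) => /rowP /(_ (odx hm k)).
by rewrite !mxE.
Qed.

Lemma st_nz (C : 'I_n -> 'M[F]_m) (init : 'I_n -> 'rV[F]_m) : (exists i, init i != 0) -> st hm C init 0 != 0.
Proof.
case=> i; apply: contra => /eqP h; apply/eqP/rowP => o.
have := congr1 (fun v : 'rV_(n * m) => v 0 (blk_idx i o)) h.
rewrite /= stE add0n (seq_init _ _ (ltn_ord i)) !mxE => <-.
by congr (init _ 0 o); apply: val_inj.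
Qed.

Lemma eq_from_rows (A B : 'M[F]_(n * m)) :
  (forall v : 'rV_(n * m), v *m A = v *m B) -> A = B.
Proof. by move=> h; apply/row_matrixP => i; rewrite !rowE h. Qed.

Lemma char_prim (C : 'I_n -> 'M[F]_m) :
  primitive_lfsr C <-> (bcmx hm C \in unitmx) && mx_order_is (bcmx hm C) Nq.
Proof.
set T := bcmx hm C.
have N0 := Nq_gt0.
split=> [P|/andP [Tu /and3P [_ /eqP TN /forallP To]]].
  have TN : T ^+ Nq = 1%:M.
    apply: eq_from_rows => v; rewrite mulmx1.
    have [->|vn] := eqVneq v 0; first by rewrite mul0mx.
    have [_ [per _]] := P _ (init_of_nz vn).
    by have := (proj1 (perP hm hn C (init_of v) Nq) per); rewrite st_init_of.
  have Tu : T \in unitmx.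
    apply: (proj1 (@mulmx1_unit _ _ T (T ^+ Nq.-1) _)).
    by rewrite -[T *m _]/(T * T ^+ Nq.-1) -exprS prednK.
  rewrite Tu /mx_order_is N0 TN eqxx /=; apply/forallP => j; apply/implyP => j0.
  apply/eqP => Tj.
  pose v : 'rV[F]_(n * m) := delta_mx 0 (blk_idx (Ordinal hn) (Ordinal hm)).
  have vn : v != 0.
    apply/eqP => /rowP /(_ (blk_idx (Ordinal hn) (Ordinal hm))).
    by rewrite !mxE !eqxx /=; apply/eqP; rewrite oner_neq0.
  have [_ [_ mini]] := P _ (init_of_nz vn).
  have := mini j j0 (proj2 (perP hm hn C (init_of v) j) _).
  rewrite leqNgt ltn_ord => h; have hh : st hm C (init_of v) 0 *m T ^+ j = st hm C (init_of v) 0 by rewrite Tj mulmx1.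
  by move: (h hh).
move=> init ini; have vn := st_nz C ini.
set v := st hm C init 0 in vn.
split; first exact: N0.
split; first by apply/(perP hm hn); rewrite TN mulmx1.
move=> r r0 /(perP hm hn) Pr; rewrite leqNgt; apply/negP => rN.
have e1 : Nq = (expn #|F| (n * m) - 1)%N by rewrite mulnC.
have e2 : (0 < n * m)%N by rewrite muln_gt0 hn hm.
have e3 : (0 < r < Nq)%N by rewrite r0 rN.
have [e He] := @key_lemma F (n * m) T Nq e1 e2 TN (fun j j0 => implyP (To j) j0) r e3.
have ve : v *m T ^+ e = 0 by rewrite -He mulmxBr mulmx1 Pr subrr.
case/eqP: vn.
have -> : v = v *m T ^+ (e * Nq) by rewrite [(e * _)%N]mulnC exprM TN expr1n mulmx1.
have eN : (e <= e * Nq)%N by rewrite leq_pmulr.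
by rewrite -(subnKC eN) exprD mulmxA ve mul0mx.
Qed.

Lemma is_bcmP (T : 'M[F]_(n * m)) :
  is_bcm T <-> exists C : {ffun 'I_n -> 'M[F]_m}, T = bcmx hm C.
Proof.
split=> [/existsP [C /forallP h]|[C ->]].
  exists C; apply/matrixP => i l.
  rewrite -(blk_split hm i) -(blk_split hm l) bcmxE.
  by move: (h (bdx hm i)) => /forallP /(_ (odx hm i)) /forallP /(_ (bdx hm l))
    /forallP /(_ (odx hm l)) /eqP.
apply/existsP; exists C; apply/forallP => bi; apply/forallP => oi.
apply/forallP => bj; apply/forallP => oj; by rewrite bcmxE.
Qed.

Lemma bcmx_inj : injective (fun C : {ffun 'I_n -> 'M[F]_m} => bcmx hm C).
Proof.
move=> C1 C2 /= h; apply/ffunP => b; apply/matrixP => o o'.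
have nl : (n.-1 < n)%N by rewrite prednK.
have := congr1 (fun T : 'M[F]_(n * m) => T (blk_idx b o) (blk_idx (Ordinal nl) o')) h.
by rewrite /= !bcmxE /bcm_entry /= eqxx.
Qed.

End M3.

Theorem theorem5p2 (F : finFieldType) (m n : nat) (hm : (0 < m)%N) (hn : (0 < n)%N) :
  ((#|[set C : {ffun 'I_n -> 'M[F]_m} | `[< primitive_lfsr C >]]|)%:R
     = Upsilon m n #|F|)
  <->
  ((#|[set T : 'M[F]_(n * m) |
        [&& is_bcm T, T \in unitmx & mx_order_is T (#|F| ^ (m * n) - 1)%N]]|)%:R
     = Upsilon m n #|F|).
Proof.
set A := [set C : {ffun 'I_n -> 'M[F]_m} | `[< primitive_lfsr C >]].
set B := [set T : 'M[F]_(n * m) | _].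
suff -> : B = (fun C : {ffun 'I_n -> 'M[F]_m} => bcmx hm C) @: A.
  by rewrite card_imset //; apply: bcmx_inj.
apply/setP => T; rewrite inE; apply/idP/imsetP.
  case/and3P => /is_bcmP [C eT] Tu To; exists C => //.
  by rewrite inE; apply/asboolP; apply/(char_prim hm hn); rewrite -eT Tu.
case=> C; rewrite inE => /asboolP /(char_prim hm hn) /andP [Tu To] ->.
apply/and3P; split => //; apply/(is_bcmP hm); by exists C.
Qed.
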